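(* Let $\mathcal C$ be a cartesian closed category with regular epi-mono factorizations and $S$ an object of $\mathcal C$ having at least one global element $1\to S$. Then for every $T$-algebra $(X,h)$ of the state monad $T$ on $S$, the morphism $e_X^*:X\to Y^S$ (with $Y=L(X,h)$) has a section.
   Context: $U(X)=X^S$, $F(X)=S\times X$, $F\dashv U$, $T=UF$, $TX=(S\times X)^S$. For $f:S\times X\to Z$, $f^*:X\to Z^S$ is its transpose. $\epsilon$ is the counit (evaluation), $\eta_X=(\mathrm{id}_{S\times X})^*$, $\mu_X=(\epsilon_{S\times X})^S$; $q_X:S\times X\to X$ is the second projection. A $T$-algebra is $(X,h)$, $h:TX\to X$, with $h\circ Th=h\circ\mu_X$, $h\circ\eta_X=\mathrm{id}_X$. For a $T$-algebra $(X,h)$, $f_X=h\circ q_{S\times X}^*:S\times X\to X$ is factored as $f_X=m_X\circ e_X$ with $e_X:S\times X\to Y$ a regular epimorphism and $m_X:Y\to X$ a monomorphism; $Y=L(X,h)$ and $e_X^*:X\to Y^S$ is the transpose of $e_X$. *)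

(* Defs.v *)
Set Implicit Arguments.
Unset Strict Implicit.

Record Cat := {
  Ob :> Type;
  Hom : Ob -> Ob -> Type;
  idm : forall A : Ob, Hom A A;
  comp : forall A B C : Ob, Hom B C -> Hom A B -> Hom A C;
  comp_id_l : forall A B (f : Hom A B), comp (idm B) f = f;
  comp_id_r : forall A B (f : Hom A B), comp f (idm A) = f;
  comp_assoc : forall A B C D (f : Hom C D) (g : Hom B C) (k : Hom A B),
      comp f (comp g k) = comp (comp f g) k
}.
Arguments Hom {c} A B.
Arguments idm {c} A.
Arguments comp {c A B C} f g.

(** Cartesian closed categories: terminal object, binary products,
    exponentials [exp S Z = Z^S] with evaluation [ev : S x Z^S -> Z]
    and transpose [curry f : X -> Z^S] for [f : S x X -> Z]. *)
Record CCC := {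
  ccat :> Cat;
  one : ccat;
  to_one : forall A : ccat, Hom A one;
  to_one_unique : forall (A : ccat) (f : Hom A one), f = to_one A;
  prod : ccat -> ccat -> ccat;
  p1 : forall A B : ccat, Hom (prod A B) A;
  p2 : forall A B : ccat, Hom (prod A B) B;
  pair : forall (A B D : ccat), Hom D A -> Hom D B -> Hom D (prod A B);
  pair_p1 : forall A B D (f : Hom D A) (g : Hom D B), comp (p1 A B) (pair f g) = f;
  pair_p2 : forall A B D (f : Hom D A) (g : Hom D B), comp (p2 A B) (pair f g) = g;
  pair_unique : forall A B D (f : Hom D A) (g : Hom D B) (k : Hom D (prod A B)),
      comp (p1 A B) k = f -> comp (p2 A B) k = g -> k = pair f g;
  exp : ccat -> ccat -> ccat;
  ev : forall S Z : ccat, Hom (prod S (exp S Z)) Z;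
  curry : forall (S X Z : ccat), Hom (prod S X) Z -> Hom X (exp S Z);
  curry_ev : forall S X Z (f : Hom (prod S X) Z),
      comp (ev S Z) (pair (p1 S X) (comp (curry f) (p2 S X))) = f;
  curry_unique : forall S X Z (f : Hom (prod S X) Z) (g : Hom X (exp S Z)),
      comp (ev S Z) (pair (p1 S X) (comp g (p2 S X))) = f -> g = curry f
}.
Arguments one {c}.
Arguments prod {c} A B.
Arguments p1 {c} A B.
Arguments p2 {c} A B.
Arguments pair {c A B D} f g.
Arguments exp {c} S Z.
Arguments ev {c} S Z.
Arguments curry {c S X Z} f.

Section Defs.
Variable C : CCC.

Definition mono (A B : C) (m : Hom A B) : Prop :=
  forall (D : C) (x y : Hom D A), comp m x = comp m y -> x = y.

Definition regular_epi (A B : C) (e : Hom A B) : Prop :=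
  exists (D : C) (u v : Hom D A), comp e u = comp e v /\
    forall (E : C) (g : Hom A E), comp g u = comp g v ->
      exists k : Hom B E, comp k e = g /\
        forall k' : Hom B E, comp k' e = g -> k' = k.

Definition has_regepi_mono_factorizations : Prop :=
  forall (A B : C) (f : Hom A B), exists (Y : C) (e : Hom A Y) (m : Hom Y B),
    regular_epi e /\ mono m /\ comp m e = f.

(** The state monad on S: F X = S x X, U X = X^S, T = U F. *)
Variable S : C.

Definition Fmap (A B : C) (g : Hom A B) : Hom (prod S A) (prod S B) :=
  pair (p1 S A) (comp g (p2 S A)).

Definition Umap (A B : C) (g : Hom A B) : Hom (exp S A) (exp S B) :=
  curry (comp g (ev S A)).

Definition T (X : C) : C := exp S (prod S X).
Definition Tmap (A B : C) (g : Hom A B) : Hom (T A) (T B) := Umap (Fmap g).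

Definition eta (X : C) : Hom X (T X) := curry (idm (prod S X)).
Definition mu (X : C) : Hom (T (T X)) (T X) := Umap (ev S (prod S X)).
Definition q (X : C) : Hom (prod S X) X := p2 S X.

Definition is_T_algebra (X : C) (h : Hom (T X) X) : Prop :=
  comp h (Tmap h) = comp h (mu X) /\ comp h (eta X) = idm X.

Definition fX (X : C) (h : Hom (T X) X) : Hom (prod S X) X :=
  comp h (curry (q (prod S X))).

End Defs.

(* Main.v *)
Require Import Defs.
Set Implicit Arguments.

Local Notation "f ** g" := (comp f g) (at level 40, left associativity).

Ltac nrm := repeat rewrite comp_assoc.

Lemma pair_comp (C : CCC) (A B D E : C) (a : Hom D A) (b : Hom D B) (k : Hom E D) :
  pair a b ** k = pair (a ** k) (b ** k).
Proof. apply pair_unique; nrm; repeat rewrite pair_p1; repeat rewrite pair_p2; reflexivity. Qed.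

Lemma Fmap_comp (C : CCC) (S A B D : C) (f : Hom B D) (g : Hom A B) :
  Fmap S (f ** g) = Fmap S f ** Fmap S g.
Proof.
  unfold Fmap. symmetry. apply pair_unique; nrm; repeat rewrite pair_p1; repeat rewrite pair_p2; auto.
  rewrite <- (comp_assoc f), pair_p2. nrm. reflexivity.
Qed.

Lemma p2_Fmap (C : CCC) (S A B : C) (g : Hom A B) : p2 S B ** Fmap S g = g ** p2 S A.
Proof. unfold Fmap; apply pair_p2. Qed.

Lemma ev_Fmap (C : CCC) (S X Z : C) (f : Hom (prod S X) Z) : ev S Z ** Fmap S (curry f) = f.
Proof. apply curry_ev. Qed.

Lemma curry_comp (C : CCC) (S X Z W : C) (f : Hom (prod S X) Z) (g : Hom W X) :
  curry f ** g = curry (f ** Fmap S g).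
Proof.
  apply curry_unique. change (ev S Z ** Fmap S (curry f ** g) = f ** Fmap S g).
  rewrite Fmap_comp, comp_assoc, ev_Fmap. reflexivity.
Qed.

Lemma Umap_curry (C : CCC) (S X A B : C) (g : Hom A B) (f : Hom (prod S X) A) :
  Umap S g ** curry f = curry (g ** f).
Proof. unfold Umap. rewrite curry_comp, <- comp_assoc, ev_Fmap. reflexivity. Qed.

Lemma pair_id (C : CCC) (A B : C) : pair (p1 A B) (p2 A B) = idm (prod A B).
Proof. symmetry; apply pair_unique; apply comp_id_r. Qed.

Lemma curry_ev_id (C : CCC) (S Z : C) : curry (ev S Z) = idm (exp S Z).
Proof.
  symmetry; apply curry_unique. rewrite comp_id_l, pair_id, comp_id_r. reflexivity.
Qed.

Lemma curry_inj (C : CCC) (S X Z : C) (a b : Hom (prod S X) Z) : curry a = curry b -> a = b.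
Proof. intro H. rewrite <- (@ev_Fmap C S X Z a), <- (@ev_Fmap C S X Z b), H. reflexivity. Qed.

Lemma regepi_epi (C : CCC) (A B : C) (e : Hom A B) : regular_epi e ->
  forall W (g1 g2 : Hom B W), g1 ** e = g2 ** e -> g1 = g2.
Proof.
  intros [D [u [v [Huv H]]]] W g1 g2 Hg.
  destruct (H W (g1 ** e)) as [k [_ Hk]].
  - rewrite <- !comp_assoc, Huv. reflexivity.
  - rewrite (Hk g1 eq_refl), (Hk g2 (eq_sym Hg)). reflexivity.
Qed.

Lemma Fmap_epi (C : CCC) (S A B : C) (e : Hom A B) : regular_epi e ->
  forall W (a b : Hom (prod S B) W), a ** Fmap S e = b ** Fmap S e -> a = b.
Proof.
  intros He W a b H. apply curry_inj. apply (regepi_epi He).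
  rewrite !curry_comp, H. reflexivity.
Qed.

Lemma G (C : CCC) (S X Z : C) (h : Hom (T S X) X) (Halg : is_T_algebra h)
  (c : Hom Z (T S X)) :
  fX h ** Fmap S (h ** c) = h ** curry (ev S (prod S X) ** Fmap S c ** p2 S (prod S Z)).
Proof.
  destruct Halg as [Hass _].
  unfold fX, q. rewrite Fmap_comp.
  assert (E1 : curry (p2 S (prod S X)) ** Fmap S h = Tmap S h ** curry (p2 S (prod S (T S X)))).
  { unfold Tmap, T. rewrite Umap_curry, curry_comp, !p2_Fmap. reflexivity. }
  assert (E2 : mu S X ** curry (p2 S (prod S (T S X))) ** Fmap S c
     = curry (ev S (prod S X) ** Fmap S c ** p2 S (prod S Z))).
  { unfold mu, Umap, T. rewrite !curry_comp. f_equal.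
    rewrite <- (comp_assoc (ev S (prod S X)) (ev _ _)), ev_Fmap.
    rewrite <- comp_assoc, p2_Fmap, comp_assoc. reflexivity. }
  rewrite <- E2. rewrite !comp_assoc. f_equal. rewrite <- Hass, <- !comp_assoc. f_equal. exact E1.
Qed.

Theorem mainTheorem8 (C : CCC)
  (Hfact : has_regepi_mono_factorizations C)
  (S : C) (s0 : @Hom C one S)
  (X : C) (h : @Hom C (T S X) X) (Halg : is_T_algebra h)
  (Y : C) (e : @Hom C (prod S X) Y) (m : @Hom C Y X)
  (He : regular_epi e) (Hm : mono m) (Hfm : comp m e = fX h) :
  exists s : @Hom C (exp S Y) X, comp (curry e) s = idm (exp S Y).
Proof.
  assert (K : e ** pair (p1 S Y) (m ** p2 S Y) = p2 S Y).
  { apply (Fmap_epi S He). rewrite p2_Fmap.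
    assert (P : pair (p1 S Y) (m ** p2 S Y) ** Fmap S e = Fmap S (fX h)).
    { unfold Fmap. rewrite pair_comp, pair_p1, <- comp_assoc, pair_p2, comp_assoc, Hfm. reflexivity. }
    assert (A : fX h ** Fmap S (fX h) = fX h ** p2 S (prod S X)).
    { change (fX h ** Fmap S (h ** curry (q S (prod S X))) = fX h ** p2 S (prod S X)).
      rewrite (@G C S X _ h Halg). unfold fX, q, T. rewrite <- (comp_assoc h). f_equal. etransitivity; [| symmetry; apply curry_comp].
      f_equal. rewrite ev_Fmap, p2_Fmap. reflexivity. }
    apply Hm. rewrite <- (comp_assoc e), P, !comp_assoc, Hfm, A. reflexivity. }
  set (t := pair (p1 S (exp S Y)) (m ** ev S Y)).
  exists (h ** curry t).
  rewrite <- (@curry_ev_id C S Y).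
  transitivity (curry (e ** Fmap S (h ** curry t))); [apply curry_comp|]. f_equal.
  apply Hm. rewrite comp_assoc, Hfm. rewrite (@G C S X _ h Halg).
  rewrite ev_Fmap.
  transitivity (fX h ** t).
  - unfold fX, q. rewrite <- (comp_assoc h). f_equal. symmetry.
    etransitivity; [apply curry_comp|]. f_equal. apply p2_Fmap.
  - rewrite <- Hfm, <- comp_assoc. f_equal.
    assert (Et : t = pair (p1 S Y) (m ** p2 S Y) ** pair (p1 S (exp S Y)) (ev S Y)).
    { unfold t. rewrite pair_comp, pair_p1, <- comp_assoc, pair_p2. reflexivity. }
    rewrite Et, comp_assoc, K, pair_p2. reflexivity.
Qed.
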